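(* Let $G$ be an always solvable graph with $n\ge 1$ vertices. Then there exists a chain of always solvable subgraphs $G=G_0\supset G_1\supset\cdots\supset G_{n-1}=K_1$, where for each $k$, $G_k$ is obtained from $G_{k-1}$ by deleting a single vertex (together with its incident edges).
   Context: For a finite simple graph $G$ with vertex set $\{v_1,\dots,v_n\}$, the closed adjacency matrix $N(G)$ is the $n\times n$ matrix over $\mathbb{Z}_2$ whose $(i,j)$ entry is $1$ iff $i=j$ or $v_i$ is adjacent to $v_j$. The nullity of $G$ is $\nu(G):=\dim\operatorname{Ker}(N(G))$ over $\mathbb{Z}_2$. $G$ is called always solvable if $\nu(G)=0$, equivalently if for every $\mathbf{c}\in\mathbb{Z}_2^{V(G)}$ there is $\mathbf{p}$ with $N(G)\mathbf{p}=\mathbf{c}$ (Lights Out game: every configuration can be turned off). *)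

(* Defs.v *)
From mathcomp Require Import all_boot all_algebra.
Set Implicit Arguments. Unset Strict Implicit. Unset Printing Implicit Defensive.
Import GRing.Theory.
Local Open Scope ring_scope.

(* Subgraphs obtained by deleting vertices are the induced subgraphs on
   vertex subsets S : {set T}; vertices of S are numbered v_1..v_|S| via
   enum_val. *)

Definition simple_graph (T : finType) (e : rel T) : Prop :=
  symmetric e /\ irreflexive e.

Definition closed_adj (T : finType) (e : rel T) (S : {set T}) : 'M['F_2]_#|S| :=
  \matrix_(i, j) (if (enum_val i == enum_val j) || e (enum_val i) (enum_val j)
                  then 1 else 0).

(* nullity = dim Ker N over Z_2: cokermx N spans {v | N *m v = 0}. *)
Definition nullity (T : finType) (e : rel T) (S : {set T}) : nat :=
  \rank (cokermx (closed_adj e S)).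

Definition always_solvable (T : finType) (e : rel T) (S : {set T}) : Prop :=
  nullity e S = 0%N.

(* Main.v *)
Require Import Defs.
From mathcomp Require Import all_boot all_algebra zify.
Set Implicit Arguments. Unset Strict Implicit. Unset Printing Implicit Defensive.
Import GRing.Theory.

Section Aux.
Local Open Scope ring_scope.

Lemma F2_double (x : 'F_2) : x + x = 0.
Proof.
case: x => [[|[|k]]] Hk; apply/val_inj => //=.
Qed.

Lemma solvable_row_free (T : finType) (e : rel T) (S : {set T}) :
  always_solvable e S <-> row_free (closed_adj e S).
Proof.
rewrite /always_solvable /nullity mxrank_coker /row_free.
have Hr := rank_leq_col (closed_adj e S).
split => [H0|/eqP ->]; last by rewrite subnn.
by rewrite eqn_leq Hr /= -subn_eq0 H0.
Qed.

Lemma row_free_inj_iff (F : fieldType) (m n : nat) (A : 'M[F]_(m, n)) :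
  (forall u : 'rV_m, u *m A = 0 -> u = 0) -> row_free A.
Proof.
move=> H; rewrite -kermx_eq0; apply/eqP/row_matrixP => i.
rewrite row0; apply: H; by rewrite -row_mul mulmx_ker row0.
Qed.

End Aux.

Section Key.
Local Open Scope ring_scope.

Lemma inv_diag_nz (n : nat) (A : 'M['F_2]_n) (k0 : 'I_n) :
  A^T = A -> (forall k, A k k = 1) -> A \in unitmx ->
  exists k, invmx A k k != 0.
Proof.
move=> As Ad Au.
case: (boolP [exists k, invmx A k k != 0]) => [/existsP//|/existsPn Hd]; exfalso.
set B := invmx A.
have Bs : B^T = B by rewrite /B trmx_inv As.
have BijS i j : B j i = B i j by rewrite -{1}Bs mxE.
set L := \matrix_(i, j) (if (j < i)%N then B i j else 0) : 'M['F_2]_n.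
have HB : B = L + L^T.
  apply/matrixP => i j; rewrite !mxE.
  case: (ltngtP i j) => h.
  - by rewrite add0r BijS.
  - by rewrite addr0.
  - have eij : i = j by apply: ord_inj.
    subst j; rewrite addr0; apply/eqP; rewrite -[_ == _]negbK; exact: Hd.
set z := A *m delta_mx k0 (0 : 'I_1).
have q1 : z^T *m B *m z = 1.
  rewrite /z trmx_mul As -!mulmxA (mulmxA B) mulVmx // mul1mx.
  rewrite trmx_delta -rowE -colE.
  apply/matrixP => i j; rewrite !ord1 !mxE Ad //.
have q0 : z^T *m B *m z = 0.
  set M := z^T *m L *m z.
  have MT : M^T = M by apply/matrixP => i j; rewrite !ord1 mxE.
  have : z^T *m B *m z = M + M^T.
    rewrite HB mulmxDr mulmxDl /M !trmx_mul !mulmxA; congr (_ + _); by rewrite !trmxK.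
  move=> ->; rewrite MT; apply/matrixP => i j; rewrite !mxE; exact: F2_double.
rewrite q1 in q0; move/matrixP/(_ 0 0): q0; rewrite !mxE /=.
by move/eqP; rewrite oner_eq0.
Qed.

End Key.

Section Del.
Local Open Scope ring_scope.
Variables (T : finType) (e : rel T).

Definition Nadj (t s : T) : 'F_2 := if (t == s) || e t s then 1 else 0.

Lemma adjE (S : {set T}) i j : closed_adj e S i j = Nadj (enum_val i) (enum_val j).
Proof. by rewrite mxE. Qed.

Lemma adj_sym (S : {set T}) : symmetric e -> (closed_adj e S)^T = closed_adj e S.
Proof.
move=> Hs; apply/matrixP => i j; rewrite !mxE /Nadj.
by rewrite eq_sym Hs.
Qed.

Lemma adj_diag (S : {set T}) k : closed_adj e S k k = 1.
Proof. by rewrite mxE eqxx. Qed.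

Definition lk (S : {set T}) (u : 'rV['F_2]_#|S|) (t : T) : 'F_2 :=
  if [pick k : 'I_#|S| | enum_val k == t] is Some k then u 0 k else 0.

Lemma lk_out (S : {set T}) (u : 'rV['F_2]_#|S|) t : t \notin S -> lk u t = 0.
Proof.
rewrite /lk; case: pickP => // k /eqP <-; by rewrite enum_valP.
Qed.

Lemma lk_ev (S : {set T}) (u : 'rV['F_2]_#|S|) (m : 'I_#|S|) : lk u (enum_val m) = u 0 m.
Proof.
rewrite /lk; case: pickP => [k /eqP/enum_val_inj -> //|/(_ m)].
by rewrite eqxx.
Qed.

Lemma delete_step (S : {set T}) (k : 'I_#|S|) :
  symmetric e -> row_free (closed_adj e S) -> invmx (closed_adj e S) k k != 0 ->
  row_free (closed_adj e (S :\ enum_val k)).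
Proof.
move=> Hs Hf Hk.
set v := enum_val k; set S' := S :\ v.
set A := closed_adj e S.
have Au : A \in unitmx by rewrite -row_free_unit.
apply: row_free_inj_iff => u' Hu'.
set x := lk u'.
have xout t : t \notin S' -> x t = 0 by apply: lk_out.
set u := \row_l x (enum_val l) : 'rV['F_2]_#|S|.
have Hsum w : \sum_(t in S) x t * Nadj t w = \sum_(m < #|S'|) u' 0 m * Nadj (enum_val m) w.
  rewrite (big_setD1 v) /= ?enum_valP // xout ?setD11 // mul0r add0r big_enum_val.
  by apply: eq_bigr => m _; rewrite /x lk_ev.
have HuA l : l != k -> (u *m A) 0 l = 0.
  move=> hl; rewrite mxE.
  transitivity (\sum_(t in S) x t * Nadj t (enum_val l)).
    by rewrite [RHS]big_enum_val; apply: eq_bigr => m _; rewrite mxE adjE.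
  have Hin : enum_val l \in S' by rewrite in_setD1 enum_valP (inj_eq enum_val_inj) hl.
  rewrite Hsum -(enum_rankK_in Hin Hin).
  move/rowP/(_ (enum_rank_in Hin (enum_val l))): Hu'; rewrite !mxE => H0; rewrite -[X in _ = X]H0.
  by apply: eq_bigr => m _; rewrite adjE.
set c := (u *m A) 0 k.
have HuA' : u *m A = c *: (delta_mx 0 k : 'rV['F_2]_#|S|).
  apply/rowP => l.
  have -> : (c *: (delta_mx 0 k : 'rV['F_2]_#|S|)) 0 l = c * (l == k)%:R by rewrite !mxE eqxx.
  case: eqP => [->|/eqP hl]; first by rewrite mulr1.
  by rewrite mulr0 HuA.
have Hu : u = (c *: delta_mx 0 k) *m invmx A by rewrite -HuA' mulmxK.
have uk : u 0 k = 0 by rewrite mxE /v xout // setD11.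
have c0 : c = 0.
  move: uk; rewrite Hu -scalemxAl -rowE !mxE => /eqP; rewrite mulf_eq0.
  by case/orP => /eqP // H0; move: Hk; rewrite H0 eqxx.
have u0 : u = 0 by rewrite Hu c0 scale0r mul0mx.
apply/rowP => m; rewrite mxE.
have Hm : enum_val m \in S by move: (enum_valP m); rewrite in_setD1 => /andP[].
rewrite -(lk_ev u' m) -/x -(enum_rankK_in Hm Hm).
by move/rowP/(_ (enum_rank_in Hm (enum_val m))): u0; rewrite !mxE.
Qed.

End Del.

Section Main.
Variables (T : finType) (e : rel T).

Lemma main_step (S : {set T}) : symmetric e -> (0 < #|S|)%N -> always_solvable e S ->
  exists2 v, v \in S & always_solvable e (S :\ v).
Proof.
move=> Hs H0 /solvable_row_free Hf.
have As := @adj_sym T e S Hs; have Ad := @adj_diag T e S.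
have [k Hk] := inv_diag_nz (Ordinal H0) As Ad
  (etrans (esym (row_free_unit _)) Hf).
exists (enum_val k); first exact: enum_valP.
by apply/solvable_row_free; apply: delete_step.
Qed.

Definition step (S : {set T}) : {set T} :=
  if [pick v in S | nullity e (S :\ v) == 0%N] is Some v then S :\ v else S.

Lemma step_spec (S : {set T}) : symmetric e -> (0 < #|S|)%N -> always_solvable e S ->
  exists2 v, v \in S & step S = S :\ v /\ always_solvable e (S :\ v).
Proof.
move=> Hs H0 Ha; rewrite /step; case: pickP => [v /andP[vS /eqP Hv]|Hn].
  by exists v.
have [v vS Hv] := main_step Hs H0 Ha.
by move: (Hn v); rewrite vS /= Hv eqxx.
Qed.

End Main.

Theorem corollary2p9 (T : finType) (e : rel T) :
  simple_graph e -> (0 < #|T|)%N -> always_solvable e [set: T] ->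
  exists G : nat -> {set T},
    [/\ G 0%N = [set: T],
        (forall k : nat, (0 < k < #|T|)%N ->
           exists2 v, v \in G k.-1 & G k = G k.-1 :\ v),
        (forall k : nat, (k < #|T|)%N -> always_solvable e (G k))
      & #|G (#|T|.-1)| = 1%N].
Proof.
move=> [Hs _] HT Ha.
pose G k := iter k (step e) [set: T].
have Inv k : (k < #|T|)%N -> #|G k| = (#|T| - k)%N /\ always_solvable e (G k).
  elim: k => [_|k IH Hk]; first by rewrite subn0 cardsT.
  have [Hc Hak] := IH (ltnW Hk).
  have Hpos : (0 < #|G k|)%N by rewrite Hc subn_gt0 ltnW.
  have [v vG [Hst Hav]] := step_spec Hs Hpos Hak.
  have -> : G k.+1 = G k :\ v by rewrite /G iterS -/(G k) Hst.
  split => //; move: (cardsD1 v (G k)); rewrite vG Hc; lia.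
exists G; split => //.
- move=> [|k] // /andP[_ Hk] /=.
  have [Hc Hak] := Inv k (ltnW Hk).
  have Hpos : (0 < #|G k|)%N by rewrite Hc subn_gt0 ltnW.
  have [v vG [Hst _]] := step_spec Hs Hpos Hak.
  by exists v => //; rewrite /G iterS -/(G k) Hst.
- by move=> k /Inv[].
- have Hlt : (#|T|.-1 < #|T|)%N by rewrite prednK.
  have [-> _] := Inv _ Hlt; lia.
Qed.
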